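(* For every choice of parameters, the Data Revocation Game has at least one pure-strategy Nash equilibrium. Moreover, there exist parameter choices for which it has more than one pure-strategy Nash equilibrium.
   Context: Data Revocation Game: a finite set of users $\mathcal I=\{1,\dots,I\}$, $I\ge 2$. Each user $i$ has parameters $d_i^{\max}>0$, $\epsilon_i>0$, $\xi_i>0$, $\ell_i>0$, $\theta_i\ge 0$. Each user chooses $d_i\in[0,d_i^{\max}]$. Payoff $$U_i(d_i,\boldsymbol{d_{-i}})=\ln\Big(\sum_{j\in\mathcal I}d_j+\epsilon_i\Big)-\xi_i d_i\ell_i-\theta_i d_i\sum_{j\neq i}\Big(1-\frac{d_j}{d_j^{\max}}\Big)\ell_j^2 .$$ A Nash equilibrium is a profile $(d_i^* )$ with $d_i^*\in[0,d_i^{\max}]$ and $U_i(d_i^*,\boldsymbol{d_{-i}^*})\ge U_i(d_i,\boldsymbol{d_{-i}^*})$ for all $i$ and all $d_i\in[0,d_i^{\max}]$. *)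

(* Defs.v *)
From HB Require Import structures.
From mathcomp Require Import all_boot all_order all_algebra.
From mathcomp Require Import all_classical all_reals all_analysis.
Set Implicit Arguments. Unset Strict Implicit. Unset Printing Implicit Defensive.
Import Order.TTheory GRing.Theory Num.Theory.
Local Open Scope ring_scope.

Section DRG.
Variables (R : realType) (n : nat).

Definition payoff (dmax eps xi ell theta : 'I_n -> R) (d : 'I_n -> R) (i : 'I_n) : R :=
  ln (\sum_(j < n) d j + eps i) - xi i * d i * ell i
  - theta i * d i * \sum_(j < n | j != i) (1 - d j / dmax j) * ell j ^+ 2.

Definition deviate (d : 'I_n -> R) (i : 'I_n) (x : R) : 'I_n -> R :=
  fun j => if j == i then x else d j.

Definition feasible (dmax : 'I_n -> R) (d : 'I_n -> R) : Prop :=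
  forall i, 0 <= d i <= dmax i.

Definition is_NE (dmax eps xi ell theta : 'I_n -> R) (d : 'I_n -> R) : Prop :=
  feasible dmax d /\
  forall (i : 'I_n) (x : R), 0 <= x <= dmax i ->
    payoff dmax eps xi ell theta (deviate d i x) i <= payoff dmax eps xi ell theta d i.

Definition valid_params (dmax eps xi ell theta : 'I_n -> R) : Prop :=
  (1 < n)%N /\ (forall i, 0 < dmax i) /\ (forall i, 0 < eps i) /\
  (forall i, 0 < xi i) /\ (forall i, 0 < ell i) /\ (forall i, 0 <= theta i).

End DRG.

(* Main.v *)
Require Import Defs.
From HB Require Import structures.
From mathcomp Require Import all_boot all_order all_algebra.
From mathcomp Require Import all_classical all_reals all_analysis.
From mathcomp Require Import ring lra.
Import Order.TTheory GRing.Theory Num.Theory.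
Import numFieldNormedType.Exports.
Local Open Scope classical_set_scope.
Local Open Scope ring_scope.

(* Proof idea: KKT conditions imply Nash equilibrium
   (concavity of ln); existence is reduced to two nested one-dimensional
   intermediate value arguments on the aggregates S = sum d and T = sum a d. *)

Ltac noMM t := lazymatch t with
  | context [Num.min _ _] => fail
  | context [Num.max _ _] => fail
  | _ => idtac end.
Ltac mmstep := match goal with
  | H : is_true (?x <= ?y) |- context [Num.min ?x ?y] => rewrite (min_l H)
  | H : is_true (?y < ?x) |- context [Num.min ?x ?y] => rewrite (min_r (ltW H))
  | H : is_true (?x <= ?y) |- context [Num.max ?x ?y] => rewrite (max_r H)
  | H : is_true (?y < ?x) |- context [Num.max ?x ?y] => rewrite (max_l (ltW H))
  | |- context [Num.min ?x ?y] => noMM x; noMM y; case: (leP x y) => ?; try (exfalso; lra)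
  | |- context [Num.max ?x ?y] => noMM x; noMM y; case: (leP x y) => ?; try (exfalso; lra)
  end.
Ltac mm := repeat mmstep.

Section Gen.
Context {R : realType}.
Implicit Types (x y a b c L U X Y w M : R).

Definition mu (L U a b : R) := Num.max 0 (Num.min b U - Num.max a L).
Definition clamp (x M : R) := Num.min (Num.max x 0) M.

Lemma clamp_ge0 x M : 0 <= M -> 0 <= clamp x M.
Proof. rewrite /clamp => h; mm; lra. Qed.
Lemma clamp_le x M : 0 <= M -> clamp x M <= M.
Proof. rewrite /clamp => h; mm; lra. Qed.
Lemma clamp_pos x M : 0 < clamp x M -> clamp x M <= x.
Proof. rewrite /clamp; mm; lra. Qed.
Lemma clamp_ltM x M : 0 <= M -> clamp x M < M -> x <= clamp x M.
Proof. rewrite /clamp => h; mm; lra. Qed.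
Lemma clamp_lip x y M : 0 <= M -> `|clamp x M - clamp y M| <= `|x - y|.
Proof.
move=> h; have n1 : x - y <= `|x - y| := ler_norm _.
have n2 : y - x <= `|x - y| by rewrite distrC ler_norm.
rewrite ler_norml /clamp; apply/andP; split; mm; lra.
Qed.
Lemma clamp_anti x y M : x <= y -> clamp x M <= clamp y M.
Proof. rewrite /clamp => h; mm; lra. Qed.

Lemma mu_le L U a b : L <= U -> mu L U a b <= Num.max 0 (b - a).
Proof. rewrite /mu => h1; mm; lra. Qed.

Lemma mu_ge0 L U a b : 0 <= mu L U a b.
Proof. by rewrite /mu le_max lexx. Qed.

Lemma mu_splitL L U Lx Ux a b : Lx <= Ux -> U <= Lx ->
  mu L U a b = mu L U a (Num.min b Lx) + mu L U (Num.max a Ux) b.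
Proof.
move=> h1 h2; rewrite /mu.
have e1 : Num.min (Num.min b Lx) U = Num.min b U by rewrite -minA (min_r h2).
have z : Num.max 0 (Num.min b U - Num.max (Num.max a Ux) L) = 0.
  apply: max_l.
  have t1 : Num.min b U <= U by rewrite ge_min lexx orbT.
  have t2 : Ux <= Num.max (Num.max a Ux) L by rewrite !le_max lexx; rewrite ?orbT.
  lra.
by rewrite e1 z addr0.
Qed.

Lemma mu_splitR L U Lx Ux a b : L <= U -> Lx <= Ux -> Ux <= L ->
  mu L U a b = mu L U a (Num.min b Lx) + mu L U (Num.max a Ux) b.
Proof.
move=> h0 h1 h2; rewrite /mu.
have e1 : Num.max (Num.max a Ux) L = Num.max a L by rewrite -maxA (max_r h2).
have z : Num.max 0 (Num.min (Num.min b Lx) U - Num.max a L) = 0.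
  apply: max_l.
  have t1 : Num.min (Num.min b Lx) U <= Lx by rewrite !ge_min lexx; rewrite ?orbT.
  have t2 : L <= Num.max a L by rewrite le_max lexx orbT.
  lra.
by rewrite e1 z add0r.
Qed.

Lemma mu_three Lx Ux a b : Lx <= Ux ->
  Num.max 0 (Num.min b Lx - a) + Num.max 0 (b - Num.max a Ux) + mu Lx Ux a b <= Num.max 0 (b - a).
Proof. rewrite /mu => h1; mm; lra. Qed.

Lemma clconvA U c w w' : w <= w' -> 0 <= c ->
  clamp (U - w) c - clamp (U - w') c = mu (U - c) U w w'.
Proof. rewrite /clamp /mu => h1 h2; mm; lra. Qed.

Lemma clconvB U c w X : U <= X -> 0 <= c -> clamp (U - w) c = mu (U - c) U w X.
Proof. rewrite /clamp /mu => h1 h2; mm; lra. Qed.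

Lemma clconvC U c w Y : Y <= U - c -> Y <= w -> 0 <= c ->
  c - clamp (U - w) c = mu (U - c) U Y w.
Proof. rewrite /clamp /mu => h1 h2 h3; mm; lra. Qed.

Lemma DL (I : eqType) (L U : I -> R) (r : seq I) : uniq r ->
  (forall j, j \in r -> L j <= U j) ->
  (forall j k, j \in r -> k \in r -> j != k -> U j <= L k \/ U k <= L j) ->
  forall a b, \sum_(j <- r) mu (L j) (U j) a b <= Num.max 0 (b - a).
Proof.
elim: r => [|x r IH] hu hLU hsep a b; first by rewrite big_nil le_max lexx.
move: hu => /= /andP [xr ur].
rewrite big_cons.
have hLUr : forall j, j \in r -> L j <= U j by move=> j jr; apply: hLU; rewrite inE jr orbT.
have hsepr : forall j k, j \in r -> k \in r -> j != k -> U j <= L k \/ U k <= L j.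
  by move=> j k jr kr; apply: hsep; rewrite inE ?jr ?kr orbT.
have hx : L x <= U x by apply: hLU; rewrite inE eqxx.
have sp : \sum_(j <- r) mu (L j) (U j) a b = \sum_(j <- r) mu (L j) (U j) a (Num.min b (L x))
   + \sum_(j <- r) mu (L j) (U j) (Num.max a (U x)) b.
  rewrite -big_split /=; apply: eq_big_seq => j jr.
  have jx : j != x by apply: contraNneq xr => <-.
  have := hsep j x; rewrite !inE jr eqxx orbT => /(_ isT isT jx) [] h.
    exact: mu_splitL.
  by apply: mu_splitR => //; apply: hLUr.
rewrite sp.
have := IH ur hLUr hsepr a (Num.min b (L x)).
have := IH ur hLUr hsepr (Num.max a (U x)) b.
have := @mu_three (L x) (U x) a b hx.
lra.
Qed.

End Gen.
Arguments clamp_pos {R x M}.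
Arguments clamp_ltM {R x M}.

Section Gen2.
Context {R : realType}.

Definition lipf (f : R -> R) := exists K, 0 <= K /\ forall x y, `|f x - f y| <= K * `|x - y|.

Lemma lip_cont f : lipf f -> continuous f.
Proof.
move=> [K [K0 hK]] x; apply/cvgrPdist_lt => e e0.
have K1 : 0 < K + 1 by lra.
near=> y.
have hy : `|x - y| < e / (K + 1).
  near: y; apply/nbhs_ballP; exists (e / (K + 1)); first by rewrite /= divr_gt0.
  by move=> z; rewrite /ball /=.
apply: (le_lt_trans (hK x y)).
have h2 : K * `|x - y| <= (K + 1) * `|x - y| by rewrite ler_wpM2r // ?normr_ge0; lra.
apply: (le_lt_trans h2).
by rewrite mulrC -ltr_pdivlMr.
Unshelve. all: by end_near.
Qed.

Lemma my_IVT f a b : lipf f -> a <= b -> f a <= 0 -> 0 <= f b ->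
  exists c, a <= c <= b /\ f c = 0.
Proof.
move=> hf ab fa fb.
have hc : {within `[a, b], continuous f}.
  by apply: continuous_subspaceT => w; apply: lip_cont.
have hv : Num.min (f a) (f b) <= 0 <= Num.max (f a) (f b).
  by rewrite ge_min le_max fa fb orbT.
have [c] := @IVT R f a b 0 ab hc hv.
rewrite in_itv /= => /andP[h1 h2] hc0; exists c; by rewrite h1 h2.
Qed.

End Gen2.

Lemma ln_diff_le (R : realType) (A B : R) : 0 < A -> 0 < B -> ln A - ln B <= (A - B) / B.
Proof.
move=> hA hB.
have hAB : 0 < A / B by rewrite divr_gt0.
have e : ln A = ln B + ln (A / B).
  by rewrite -lnM ?posrE // mulrC divfK // gt_eqF.
rewrite e addrC addKr.
have h : ln (1 + (A / B - 1)) <= A / B - 1 by apply: le_ln1Dx; lra.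
have e2 : 1 + (A / B - 1) = A / B by ring.
rewrite e2 in h.
have -> : (A - B) / B = A / B - 1 by rewrite mulrBl divff // gt_eqF.
exact: h.
Qed.

Lemma inv_le (R : realType) (x y : R) : 0 < x -> x <= y -> y^-1 <= x^-1.
Proof. move=> hx hxy; rewrite lef_pV2 ?posrE //; lra. Qed.

Lemma max0_lip (R : realType) (s s' : R) : `|Num.max s 0 - Num.max s' 0| <= `|s - s'|.
Proof.
have n1 : s - s' <= `|s - s'| := ler_norm _.
have n2 : s' - s <= `|s - s'| by rewrite distrC ler_norm.
rewrite ler_norml; apply/andP; split; mm; lra.
Qed.

Lemma inv_lip (R : realType) (e s s' : R) : 0 < e ->
  `|(Num.max s 0 + e)^-1 - (Num.max s' 0 + e)^-1| <= (e * e)^-1 * `|s - s'|.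
Proof.
move=> he.
have m1 : 0 <= Num.max s 0 by rewrite le_max lexx orbT.
have m2 : 0 <= Num.max s' 0 by rewrite le_max lexx orbT.
have hA : e <= Num.max s 0 + e by lra.
have hB : e <= Num.max s' 0 + e by lra.
have e1 : (Num.max s 0 + e)^-1 - (Num.max s' 0 + e)^-1 =
   (Num.max s' 0 - Num.max s 0) * ((Num.max s 0 + e) * (Num.max s' 0 + e))^-1.
  field; apply/andP; split; apply: lt0r_neq0; lra.
rewrite e1 normrM [`|_^-1|]ger0_norm; last first.
  by rewrite invr_ge0 mulr_ge0 //; lra.
rewrite mulrC; apply: ler_pM.
- by rewrite invr_ge0 mulr_ge0 //; lra.
- exact: normr_ge0.
- apply: inv_le; first by rewrite mulr_gt0.
  apply: ler_pM; lra.
- by rewrite distrC max0_lip.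
Qed.

Section Game.
Variables (R : realType) (n : nat) (dmax eps xi ell theta : 'I_n -> R).
Hypotheses (hdm : forall i, 0 < dmax i) (heps : forall i, 0 < eps i)
  (hxi : forall i, 0 < xi i) (hell : forall i, 0 < ell i) (hth : forall i, 0 <= theta i).

Definition Ssum (d : 'I_n -> R) := \sum_(j < n) d j.
Definition Cc (d : 'I_n -> R) i :=
  xi i * ell i + theta i * \sum_(j < n | j != i) (1 - d j / dmax j) * ell j ^+ 2.
Definition mg d i := (Ssum d + eps i)^-1 - Cc d i.

Lemma sum_dev (d : 'I_n -> R) i x : \sum_(j < n) deviate d i x j = Ssum d - d i + x.
Proof.
rewrite /Ssum (bigD1 i) //= [in RHS](bigD1 i) //= /deviate eqxx.
rewrite (eq_bigr (fun j => d j)); last by move=> j /negbTE ->.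
lra.
Qed.

Lemma int_dev (d : 'I_n -> R) i x :
  \sum_(j < n | j != i) (1 - deviate d i x j / dmax j) * ell j ^+ 2 =
  \sum_(j < n | j != i) (1 - d j / dmax j) * ell j ^+ 2.
Proof. by apply: eq_bigr => j /negbTE; rewrite /deviate => ->. Qed.

Lemma NE_of_KKT d : feasible dmax d ->
  (forall i, (0 < d i -> 0 <= mg d i) /\ (d i < dmax i -> mg d i <= 0)) ->
  is_NE dmax eps xi ell theta d.
Proof.
move=> hf hk; split => // i x /andP[x0 xm].
have S0 : forall j, 0 <= d j by move=> j; case/andP: (hf j).
have Si : 0 <= Ssum d - d i.
  rewrite /Ssum (bigD1 i) //=.
  have : 0 <= \sum_(j < n | j != i) d j by apply: sumr_ge0 => j _; exact: S0.
  lra.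
rewrite /payoff sum_dev int_dev {1 2}/deviate eqxx.
set Sg := \sum_(j < n | j != i) _.
have hC : forall y, xi i * y * ell i + theta i * y * Sg = y * Cc d i.
  by move=> y; rewrite /Cc -/Sg; ring.
rewrite -!addrA -!opprD hC [X in _ <= _ - X]hC -/(Ssum d).
have hA : 0 < Ssum d - d i + x + eps i by have := heps i; lra.
have hB : 0 < Ssum d + eps i by have := heps i; have := S0 i; lra.
have := @ln_diff_le R _ _ hA hB.
have [hk1 hk2] := hk i.
have key : (x - d i) * mg d i <= 0.
  case: (ltgtP x (d i)) => h.
  - have := hk1 (le_lt_trans x0 h) => hm. rewrite mulr_le0_ge0 //; lra.
  - have := hk2 (lt_le_trans h xm) => hm. rewrite mulr_ge0_le0 //; lra.
  - by rewrite h subrr mul0r.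
move: key; rewrite /mg.
have -> : (Ssum d - d i + x + eps i - (Ssum d + eps i)) / (Ssum d + eps i) = (x - d i) * (Ssum d + eps i)^-1.
  by congr (_ * _); ring.
rewrite mulrBr => k1 k2.
have eA : Ssum d + (- d i + (x + eps i)) = Ssum d - d i + x + eps i by ring.
rewrite eA; move: k1; rewrite [(x - d i) * Cc d i]mulrBl => k1.
lra.
Qed.


Definition aa j := ell j ^+ 2 / dmax j.
Definition kk i := xi i * ell i + theta i * \sum_(j < n | j != i) ell j ^+ 2.
Definition Tsum (d : 'I_n -> R) := \sum_(j < n) aa j * d j.

Lemma aa_gt0 j : 0 < aa j.
Proof. by rewrite /aa divr_gt0 // exprn_gt0. Qed.

Lemma Cc_eq d i : Cc d i = kk i - theta i * (Tsum d - aa i * d i).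
Proof.
have eT : Tsum d - aa i * d i = \sum_(j < n | j != i) aa j * d j.
  rewrite /Tsum (bigD1 i) //=; ring.
rewrite eT /Cc /kk -addrA -mulrBr -sumrB; congr (_ + _ * _); apply: eq_bigr => j _.
rewrite /aa; field; exact: lt0r_neq0.
Qed.

Definition Zb i := theta i == 0.
Definition gg i := (xi i * ell i)^-1 - eps i.
Definition prec (j i : 'I_n) : bool := (gg i < gg j) || ((gg j == gg i) && (j < i)%N).
Definition Uz i := gg i - \sum_(k < n | Zb k && prec k i) dmax k.
Definition Lz i := Uz i - dmax i.
Definition Dz w i := clamp (Uz i - w) (dmax i).
Definition ZS w := \sum_(i < n | Zb i) Dz w i.
Definition sw w := w + ZS w.

Lemma prec_irr i : ~~ prec i i.
Proof. by rewrite /prec ltxx ltnn andbF. Qed.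

Lemma prec_gg {j i} : prec j i -> gg i <= gg j.
Proof. by case/orP => [/ltW //|/andP[/eqP -> _]]. Qed.

Lemma prec_trans {a b c} : prec a b -> prec b c -> prec a c.
Proof.
rewrite /prec => /orP[h1|/andP[/eqP h1 h1']] /orP[h2|/andP[/eqP h2 h2']].
- by rewrite (lt_trans h2 h1).
- by rewrite -h2 h1.
- by rewrite h1 h2.
- by rewrite h1 h2 eqxx (ltn_trans h1' h2') orbT.
Qed.

Lemma prec_total {i j} : i != j -> prec i j || prec j i.
Proof.
move=> ij; rewrite /prec.
case: (ltgtP (gg i) (gg j)) => h //=; rewrite ?orbT //.
rewrite ?h ?eqxx /=.
by rewrite -(inj_eq val_inj) neq_ltn in ij.
Qed.

Lemma sum_sub (P Q : pred 'I_n) (f : 'I_n -> R) : (forall k, P k -> Q k) ->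
  (forall k, 0 <= f k) -> \sum_(k | P k) f k <= \sum_(k | Q k) f k.
Proof.
move=> PQ f0; rewrite [X in X <= _]big_mkcond [X in _ <= X]big_mkcond /=.
apply: ler_sum => k _; case: ifP => Pk; first by rewrite (PQ k Pk).
by case: ifP.
Qed.

Lemma sum_incl i : Zb i -> \sum_(k < n | Zb k && (prec k i || (k == i))) dmax k =
   dmax i + \sum_(k < n | Zb k && prec k i) dmax k.
Proof.
move=> Zi; rewrite (bigD1 i) /=; last by rewrite Zi eqxx orbT.
congr (_ + _); apply: eq_bigl => k.
case: (eqVneq k i) => [->|ki]; first by rewrite (negbTE (prec_irr i)) !andbF.
by rewrite orbF andbT.
Qed.

Lemma sep {j i} : Zb j -> Zb i -> prec j i -> Uz i <= Lz j.
Proof.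
move=> Zj Zi pji; rewrite /Lz /Uz.
have h1 := prec_gg pji.
have h2 : \sum_(k < n | Zb k && (prec k j || (k == j))) dmax k <=
          \sum_(k < n | Zb k && prec k i) dmax k.
  apply: sum_sub; last by move=> k; exact: ltW.
  move=> k /andP[-> /orP[pkj|/eqP ->]] //=; exact: prec_trans pkj pji.
rewrite sum_incl // in h2.
lra.
Qed.

Lemma Lz_le_Uz i : Lz i <= Uz i.
Proof. rewrite /Lz; have := hdm i; lra. Qed.

Lemma DLZ (F : pred 'I_n) : (forall j, F j -> Zb j) -> forall a b,
  \sum_(j | F j) mu (Lz j) (Uz j) a b <= Num.max 0 (b - a).
Proof.
move=> FZ a b; rewrite -big_filter; apply: DL.
- by rewrite filter_uniq // index_enum_uniq.
- by move=> j _; exact: Lz_le_Uz.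
move=> j k; rewrite !mem_filter => /andP[Fj _] /andP[Fk _] jk.
case/orP: (prec_total jk) => h.
- by right; apply: sep => //; apply: FZ.
- by left; apply: sep => //; apply: FZ.
Qed.


Lemma Dz_ge0 w i : 0 <= Dz w i.
Proof. apply: clamp_ge0; exact: ltW. Qed.
Lemma Dz_le w i : Dz w i <= dmax i.
Proof. apply: clamp_le; exact: ltW. Qed.
Lemma Dz_anti w w' i : w <= w' -> Dz w' i <= Dz w i.
Proof. move=> h; apply: clamp_anti; lra. Qed.
Lemma ZS_ge0 w : 0 <= ZS w.
Proof. by apply: sumr_ge0 => i _; exact: Dz_ge0. Qed.
Lemma ZS_anti {w w'} : w <= w' -> ZS w' <= ZS w.
Proof. by move=> h; apply: ler_sum => i _; apply: Dz_anti. Qed.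

Lemma ZS_A {w w'} : w <= w' -> ZS w - ZS w' <= w' - w.
Proof.
move=> h; rewrite /ZS -sumrB.
rewrite (eq_bigr (fun j => mu (Lz j) (Uz j) w w')); last first.
  by move=> j _; rewrite /Dz clconvA //; exact: ltW.
apply: (@le_trans _ _ (Num.max 0 (w' - w))); first by apply: DLZ.
rewrite ge_max lexx andbT; lra.
Qed.

Lemma sw_mono {w w'} : w <= w' -> sw w <= sw w'.
Proof. move=> h; have := ZS_A h; rewrite /sw; lra. Qed.

Lemma sw_lip w w' : `|sw w - sw w'| <= `|w - w'|.
Proof.
wlog h : w w' / w <= w'.
  move=> H; case: (leP w w') => h; first exact: H.
  by rewrite distrC [X in _ <= X]distrC; apply: H; exact: ltW.
have h1 := ZS_anti h; have h2 := sw_mono h.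
rewrite distrC [X in _ <= X]distrC !ger0_norm; rewrite /sw in h2 *; lra.
Qed.

Lemma sw_ge0 w : 0 <= w -> 0 <= sw w.
Proof. move=> h; have := ZS_ge0 w; rewrite /sw; lra. Qed.

Lemma ZKKT_B w i : Zb i -> 0 < Dz w i -> sw w <= gg i.
Proof.
move=> Zi hD.
have hU : w < Uz i by have := clamp_pos hD; rewrite -/(Dz w i); lra.
rewrite /sw /ZS (bigID (fun j => prec j i)) /=.
have h1 : \sum_(j < n | Zb j && prec j i) Dz w j <= \sum_(j < n | Zb j && prec j i) dmax j.
  by apply: ler_sum => j _; exact: Dz_le.
have h2 : \sum_(j < n | Zb j && ~~ prec j i) Dz w j =
          \sum_(j < n | Zb j && ~~ prec j i) mu (Lz j) (Uz j) w (Uz i).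
  apply: eq_bigr => j /andP[Zj npj]; rewrite /Dz (@clconvB _ (Uz j) (dmax j) w (Uz i)) //; last exact: ltW.
  case: (eqVneq j i) => [->|ji]; first exact: lexx.
  case/orP: (prec_total ji) => h; first by rewrite h in npj.
  have := sep Zi Zj h; have := Lz_le_Uz i; lra.
have h3 : \sum_(j < n | Zb j && ~~ prec j i) mu (Lz j) (Uz j) w (Uz i) <= Num.max 0 (Uz i - w).
  by apply: DLZ => j /andP[].
rewrite max_r in h3; last lra.
rewrite h2; move: hU h3; rewrite /Uz => hU h3; lra.
Qed.

Lemma ZKKT_C w i : Zb i -> Dz w i < dmax i -> gg i <= sw w.
Proof.
move=> Zi hD.
have hL : Lz i <= w.
  have := clamp_ltM (ltW (hdm i)) hD; rewrite -/(Dz w i) /Lz; lra.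
have h0 : \sum_(j < n | Zb j && (prec j i || (j == i))) Dz w j <= ZS w.
  by apply: sum_sub => [k /andP[]|k] //; exact: Dz_ge0.
have h2 : \sum_(j < n | Zb j && (prec j i || (j == i))) Dz w j =
   \sum_(j < n | Zb j && (prec j i || (j == i))) (dmax j - mu (Lz j) (Uz j) (Lz i) w).
  apply: eq_bigr => j /andP[Zj hj].
  rewrite /Dz -(@clconvC _ (Uz j) (dmax j) w (Lz i)) //; [ring| |exact: ltW].
  case/orP: hj => [h|/eqP ->]; last by rewrite /Lz.
  have := sep Zj Zi h; have := Lz_le_Uz i; rewrite /Lz; lra.
have h3 : \sum_(j < n | Zb j && (prec j i || (j == i))) mu (Lz j) (Uz j) (Lz i) w <= Num.max 0 (w - Lz i).
  by apply: DLZ => j /andP[].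
rewrite max_r in h3; last lra.
rewrite h2 sumrB sum_incl // in h0.
move: h0 h3; rewrite /sw /Lz /Uz; lra.
Qed.



Definition phi s t i := (Num.max s 0 + eps i)^-1 - kk i + theta i * t.
Definition beta s t i := clamp (phi s t i / (theta i * aa i)) (dmax i).
Definition Psi w t := w - \sum_(i < n | ~~ Zb i) beta (sw w) t i.
Definition prof w t i := if Zb i then Dz w i else beta (sw w) t i.
Definition WP := \sum_(i < n | ~~ Zb i) dmax i.
Definition Ks i := (eps i * eps i)^-1 / (theta i * aa i).
Definition KT := \sum_(i < n | ~~ Zb i) (aa i)^-1.
Definition KS := \sum_(i < n | ~~ Zb i) Ks i.

Lemma th_pos {i} : ~~ Zb i -> 0 < theta i.
Proof. by move=> h; rewrite lt_def hth andbT. Qed.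

Lemma pos_den s i : 0 < Num.max s 0 + eps i.
Proof. have : 0 <= Num.max s 0 by rewrite le_max lexx orbT. have := heps i; lra. Qed.

Lemma beta_ge0 s t i : 0 <= beta s t i.
Proof. apply: clamp_ge0; exact: ltW. Qed.
Lemma beta_le s t i : beta s t i <= dmax i.
Proof. apply: clamp_le; exact: ltW. Qed.
Lemma prof_ge0 w t i : 0 <= prof w t i.
Proof. by rewrite /prof; case: ifP => _; [exact: Dz_ge0|exact: beta_ge0]. Qed.
Lemma prof_le w t i : prof w t i <= dmax i.
Proof. by rewrite /prof; case: ifP => _; [exact: Dz_le|exact: beta_le]. Qed.

Lemma Ks_ge0 i : ~~ Zb i -> 0 <= Ks i.
Proof.
move=> h; apply: divr_ge0; first by rewrite invr_ge0; apply: mulr_ge0; exact: ltW.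
apply: mulr_ge0; [exact: ltW (th_pos h) | exact: ltW (aa_gt0 i)].
Qed.

Lemma beta_anti s s' t i : ~~ Zb i -> s <= s' -> beta s' t i <= beta s t i.
Proof.
move=> h ss; apply: clamp_anti; rewrite /phi.
have p := mulr_gt0 (th_pos h) (aa_gt0 i).
rewrite ler_pM2r ?invr_gt0 //.
have : (Num.max s' 0 + eps i)^-1 <= (Num.max s 0 + eps i)^-1.
  apply: inv_le.
    have := heps i; have : 0 <= Num.max s 0 by rewrite le_max lexx orbT. lra.
  have := heps i; move: ss; mm; lra.
lra.
Qed.

Lemma beta_lip_s s s' t i : ~~ Zb i -> `|beta s t i - beta s' t i| <= Ks i * `|s - s'|.
Proof.
move=> h; apply: le_trans (clamp_lip _ _ _ (ltW (hdm i))) _.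
have p := mulr_gt0 (th_pos h) (aa_gt0 i).
rewrite -mulrBl normrM [`|_^-1|]ger0_norm ?invr_ge0 ?(ltW p) //.
have e1 : phi s t i - phi s' t i = (Num.max s 0 + eps i)^-1 - (Num.max s' 0 + eps i)^-1.
  by rewrite /phi; ring.
rewrite e1 /Ks mulrAC ler_pM2r ?invr_gt0 //.
exact: inv_lip.
Qed.

Lemma beta_lip_t s t t' i : ~~ Zb i -> `|beta s t i - beta s t' i| <= (aa i)^-1 * `|t - t'|.
Proof.
move=> h; apply: le_trans (clamp_lip _ _ _ (ltW (hdm i))) _.
have p := mulr_gt0 (th_pos h) (aa_gt0 i).
have e1 : phi s t i / (theta i * aa i) - phi s t' i / (theta i * aa i) = (aa i)^-1 * (t - t').
  rewrite /phi; field; apply/and3P; split; apply: lt0r_neq0;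
    [exact: aa_gt0|exact: th_pos|exact: pos_den].
rewrite e1 normrM ger0_norm // invr_ge0; exact: ltW (aa_gt0 i).
Qed.

Lemma sum_diff_le (P : pred 'I_n) (F G K : 'I_n -> R) (x : R) :
  (forall i, P i -> `|F i - G i| <= K i * x) ->
  `|\sum_(i < n | P i) F i - \sum_(i < n | P i) G i| <= (\sum_(i < n | P i) K i) * x.
Proof.
move=> h; rewrite -sumrB mulr_suml; apply: le_trans (ler_norm_sum _ _ _) _.
by apply: ler_sum => i Pi; apply: h.
Qed.

Lemma Psi_incr w w' t : w <= w' -> w' - w <= Psi w' t - Psi w t.
Proof.
move=> h; have s1 := sw_mono h.
have : \sum_(i < n | ~~ Zb i) beta (sw w') t i <= \sum_(i < n | ~~ Zb i) beta (sw w) t i.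
  by apply: ler_sum => i hi; apply: beta_anti.
rewrite /Psi; lra.
Qed.

Lemma Psi_lip_t w t t' : `|Psi w t - Psi w t'| <= KT * `|t - t'|.
Proof.
have e : Psi w t - Psi w t' = \sum_(i < n | ~~ Zb i) beta (sw w) t' i - \sum_(i < n | ~~ Zb i) beta (sw w) t i.
  rewrite /Psi; ring.
rewrite e /KT; apply: sum_diff_le => i hi.
by rewrite distrC; apply: beta_lip_t.
Qed.

Lemma Psi_lip_w t : lipf (fun w => Psi w t).
Proof.
exists (1 + KS); split.
  have : 0 <= KS by apply: sumr_ge0 => i; exact: Ks_ge0.
  lra.
move=> w w'.
have h : `|\sum_(i < n | ~~ Zb i) beta (sw w) t i - \sum_(i < n | ~~ Zb i) beta (sw w') t i|
    <= KS * `|w - w'|.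
  rewrite /KS; apply: sum_diff_le => i hi.
  apply: le_trans (beta_lip_s _ _ _ _ hi) _.
  by rewrite ler_wpM2l ?Ks_ge0 // sw_lip.
have e : Psi w t - Psi w' t = (w - w') - (\sum_(i < n | ~~ Zb i) beta (sw w) t i - \sum_(i < n | ~~ Zb i) beta (sw w') t i).
  rewrite /Psi; ring.
rewrite e; apply: le_trans (ler_normB _ _) _.
rewrite mulrDl mul1r; lra.
Qed.

Lemma WP_ge0 : 0 <= WP.
Proof. by apply: sumr_ge0 => i _; exact: ltW. Qed.

Lemma root_ex t : exists w, (0 <= w <= WP) /\ Psi w t = 0.
Proof.
have h1 : Psi 0 t <= 0.
  rewrite /Psi add0r oppr_le0; apply: sumr_ge0 => i _; exact: beta_ge0.
have h2 : 0 <= Psi WP t.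
  rewrite /Psi subr_ge0; apply: ler_sum => i _; exact: beta_le.
have [c [hc1 hc2]] := my_IVT _ 0 WP (Psi_lip_w t) WP_ge0 h1 h2.
by exists c.
Qed.

Definition wt t := projT1 (cid (root_ex t)).
Lemma wt_prop t : (0 <= wt t <= WP) /\ Psi (wt t) t = 0.
Proof. exact: projT2 (cid (root_ex t)). Qed.

Lemma KT_ge0 : 0 <= KT.
Proof. apply: sumr_ge0 => i _; rewrite invr_ge0; exact: ltW (aa_gt0 i). Qed.

Lemma wt_lip t t' : `|wt t - wt t'| <= KT * `|t - t'|.
Proof.
have [_ p1] := wt_prop t; have [_ p2] := wt_prop t'.
case: (leP (wt t) (wt t')) => h.
- have a := Psi_lip_t (wt t') t t'; rewrite p2 subr0 in a.
  have b := Psi_incr _ _ t h; rewrite p1 subr0 in b.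
  have c := ler_norm (Psi (wt t') t).
  rewrite distrC ger0_norm ?subr_ge0 //; lra.
- have a := Psi_lip_t (wt t) t' t; rewrite p1 subr0 [`|t' - t|]distrC in a.
  have b := Psi_incr _ _ t' (ltW h); rewrite p2 subr0 in b.
  have c := ler_norm (Psi (wt t) t').
  rewrite ger0_norm ?subr_ge0 ?(ltW h) //; lra.
Qed.


Definition Kp i := if Zb i then KT else Ks i * KT + (aa i)^-1.

Lemma Kp_ge0 i : 0 <= Kp i.
Proof.
rewrite /Kp; case: ifP => Zi; first exact: KT_ge0.
have hi : ~~ Zb i by rewrite Zi.
have := Ks_ge0 i hi; have := KT_ge0; have : 0 <= (aa i)^-1 by rewrite invr_ge0 ltW // aa_gt0.
move=> a b c; have := mulr_ge0 c b; lra.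
Qed.

Lemma prof_lip i t t' : `|prof (wt t) t i - prof (wt t') t' i| <= Kp i * `|t - t'|.
Proof.
rewrite /prof /Kp; case: ifP => Zi.
- rewrite /Dz; apply: le_trans (clamp_lip _ _ _ (ltW (hdm i))) _.
  have e : (Uz i - wt t) - (Uz i - wt t') = wt t' - wt t by ring.
  rewrite e distrC; exact: wt_lip.
- have hi : ~~ Zb i by rewrite Zi.
  have e : beta (sw (wt t)) t i - beta (sw (wt t')) t' i =
     (beta (sw (wt t)) t i - beta (sw (wt t')) t i) + (beta (sw (wt t')) t i - beta (sw (wt t')) t' i).
    ring.
  rewrite e; apply: le_trans (ler_normD _ _) _.
  have h1 := beta_lip_s (sw (wt t)) (sw (wt t')) t i hi.
  have h2 := beta_lip_t (sw (wt t')) t t' i hi.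
  have h5 : Ks i * `|sw (wt t) - sw (wt t')| <= Ks i * (KT * `|t - t'|).
    apply: ler_wpM2l; first exact: Ks_ge0.
    exact: le_trans (sw_lip _ _) (wt_lip _ _).
  rewrite mulrDl -mulrA; lra.
Qed.

Definition Gf t := t - Tsum (prof (wt t) t).
Definition Tmax := \sum_(i < n) aa i * dmax i.

Lemma Gf_lip : lipf Gf.
Proof.
exists (1 + \sum_(i < n) aa i * Kp i); split.
  have : 0 <= \sum_(i < n) aa i * Kp i.
    by apply: sumr_ge0 => i _; apply: mulr_ge0; [exact: ltW (aa_gt0 i)|exact: Kp_ge0].
  lra.
move=> t t'.
have h : `|Tsum (prof (wt t) t) - Tsum (prof (wt t') t')| <= (\sum_(i < n) aa i * Kp i) * `|t - t'|.
  rewrite /Tsum; apply: sum_diff_le => i _.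
  rewrite -mulrBr normrM ger0_norm ?(ltW (aa_gt0 i)) // -mulrA.
  by apply: ler_wpM2l; [exact: ltW (aa_gt0 i)|exact: prof_lip].
have e : Gf t - Gf t' = (t - t') - (Tsum (prof (wt t) t) - Tsum (prof (wt t') t')).
  rewrite /Gf; ring.
rewrite e; apply: le_trans (ler_normB _ _) _.
rewrite mulrDl mul1r; lra.
Qed.

Lemma Tsum_le w t : Tsum (prof w t) <= Tmax.
Proof.
apply: ler_sum => i _; apply: ler_wpM2l; [exact: ltW (aa_gt0 i)|exact: prof_le].
Qed.

Lemma Tsum_ge0 w t : 0 <= Tsum (prof w t).
Proof.
apply: sumr_ge0 => i _; apply: mulr_ge0; [exact: ltW (aa_gt0 i)|exact: prof_ge0].
Qed.

Lemma exists_fix : exists t, Gf t = 0.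
Proof.
have h0 : 0 <= Tmax.
  by apply: sumr_ge0 => i _; apply: mulr_ge0; apply: ltW; [exact: aa_gt0|exact: hdm].
have h1 : Gf 0 <= 0 by rewrite /Gf add0r oppr_le0 Tsum_ge0.
have h2 : 0 <= Gf Tmax by rewrite /Gf subr_ge0 Tsum_le.
have [c [_ hc]] := my_IVT _ 0 Tmax Gf_lip h0 h1 h2.
by exists c.
Qed.

Theorem exists_NE : exists d, is_NE dmax eps xi ell theta d.
Proof.
have [t ht] := exists_fix.
set w := wt t.
have [/andP[w0 wW] pw] := wt_prop t.
rewrite -/w in w0 wW pw.
set d := prof w t.
have hS : Ssum d = sw w.
  rewrite /Ssum (bigID Zb) /=.
  have e1 : \sum_(i < n | Zb i) d i = ZS w by apply: eq_bigr => i Zi; rewrite /d /prof Zi.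
  have e2 : \sum_(i < n | ~~ Zb i) d i = \sum_(i < n | ~~ Zb i) beta (sw w) t i.
    by apply: eq_bigr => i Zi; rewrite /d /prof (negbTE Zi).
  rewrite e1 e2; move: pw; rewrite /Psi /sw; lra.
have hT : Tsum d = t by move: ht; rewrite /Gf -/w -/d; lra.
have s0 : 0 <= sw w := sw_ge0 _ w0.
exists d; apply: NE_of_KKT.
  move=> i; apply/andP; split; [exact: prof_ge0|exact: prof_le].
move=> i; rewrite /mg Cc_eq hS hT.
have hse : 0 < sw w + eps i by have := heps i; lra.
case Zi : (Zb i).
- have th0 : theta i = 0 by apply/eqP.
  have di : d i = Dz w i by rewrite /d /prof Zi.
  have kk0 : kk i = xi i * ell i by rewrite /kk th0 mul0r addr0.
  rewrite th0 mul0r subr0 kk0 di.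
  have hx : 0 < xi i * ell i by rewrite mulr_gt0.
  have invr_gt0_hx : 0 < (xi i * ell i)^-1 by rewrite invr_gt0.
  split => h.
  + have := ZKKT_B _ _ Zi h; rewrite /gg => h'.
    have : sw w + eps i <= (xi i * ell i)^-1 by lra.
    move/(@inv_le R _ _ hse); rewrite invrK; lra.
  + have := ZKKT_C _ _ Zi h; rewrite /gg => h'.
    have : (xi i * ell i)^-1 <= sw w + eps i by lra.
    move/(@inv_le R _ _ (invr_gt0_hx)); rewrite invrK; lra.
- have hi : ~~ Zb i by rewrite Zi.
  have di : d i = beta (sw w) t i by rewrite /d /prof Zi.
  have p := mulr_gt0 (th_pos hi) (aa_gt0 i).
  have hphi : phi (sw w) t i = (sw w + eps i)^-1 - kk i + theta i * t by rewrite /phi max_l.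
  rewrite di; split => h.
  + have := clamp_pos h; rewrite -/(beta (sw w) t i) ler_pdivlMr // hphi; lra.
  + have := clamp_ltM (ltW (hdm i)) h; rewrite -/(beta (sw w) t i) ler_pdivrMr // hphi; lra.
Qed.

End Game.

Definition ex_d1 (R : realType) : 'I_2 -> R := fun j => if j == ord0 then 1/2 else 0.
Definition ex_d2 (R : realType) : 'I_2 -> R := fun j => if j == ord0 then 0 else 1/2.

Lemma ex_NE (R : realType) (d : 'I_2 -> R) :
  (forall j, 0 <= d j <= 1) -> d ord0 + d (lift ord0 ord0) = 1/2 ->
  is_NE (fun _ => 1) (fun _ => 1/2) (fun _ => 1) (fun _ => 1) (fun _ => 0) d.
Proof.
move=> hf hs.
apply: (@NE_of_KKT R 2 (fun _ => 1) (fun _ => 1/2) (fun _ => 1) (fun _ => 1) (fun _ => 0)) => //.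
move=> i.
  have -> : mg R 2 (fun _ => 1) (fun _ => 1/2) (fun _ => 1) (fun _ => 1) (fun _ => 0) d i = 0.
    rewrite /mg /Cc /Ssum big_ord_recl big_ord_recl big_ord0 mul0r addr0 mulr1 addr0.
    rewrite hs.
    have -> : (1 / 2 + 1 / 2 : R) = 1 by field.
    by rewrite invr1 subrr.
  by split.
Qed.

Theorem lemma2 (R : realType) :
  (forall (n : nat) (dmax eps xi ell theta : 'I_n -> R),
      valid_params dmax eps xi ell theta ->
      exists d : 'I_n -> R, is_NE dmax eps xi ell theta d) /\
  (exists (n : nat) (dmax eps xi ell theta : 'I_n -> R),
      valid_params dmax eps xi ell theta /\
      exists d1 d2 : 'I_n -> R,
        d1 <> d2 /\ is_NE dmax eps xi ell theta d1 /\ is_NE dmax eps xi ell theta d2).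
Proof.
split.
  move=> n dmax eps xi ell theta [_ [h1 [h2 [h3 [h4 h5]]]]].
  exact: exists_NE.
exists 2, (fun _ => 1), (fun _ => 1/2), (fun _ => 1), (fun _ => 1), (fun _ => 0).
split.
  rewrite /valid_params; repeat split; try done; move=> i; lra.
exists (ex_d1 R), (ex_d2 R); split; [|split].
- move=> /(congr1 (fun f => f ord0)); rewrite /ex_d1 /ex_d2 eqxx; lra.
- apply: ex_NE; first by move=> j; rewrite /ex_d1; case: ifP => _; lra.
  by rewrite /ex_d1 eqxx /=; lra.
- apply: ex_NE; first by move=> j; rewrite /ex_d2; case: ifP => _; lra.
  by rewrite /ex_d2 eqxx /=; lra.
Qed.
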